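(* For integers $n,m,l,r$ with $1\leq m\leq l<n$ and $0\leq r\leq 2l-2m+2$, the polynomial \[ K_q(n,m)K_q(n,l)-q^{r}K_q(n,m-1)K_q(n,l+1) \] has nonnegative coefficients as a polynomial in $q$.
   Context: For integers $n\ge m\ge 0$ the Gaussian polynomial is ${n\brack m}=\prod_{i=0}^{m-1}\frac{1-q^{n-i}}{1-q^{m-i}}$. For $n\geq 1$ and $0\le m\le n$, the $q$-Kaplansky number is $K_q(n,m)=\frac{1-q^{n+m}}{1-q^{n}}{n\brack m}$ (a polynomial in $q$). *)

(* Defs.v *)
From mathcomp Require Import all_boot all_order all_algebra.
Set Implicit Arguments. Unset Strict Implicit. Unset Printing Implicit Defensive.
Import Order.TTheory GRing.Theory Num.Theory.
Local Open Scope ring_scope.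

(* Gaussian polynomial [n brack m] = prod_{i<m} (1 - q^(n-i)) / (1 - q^(m-i)),
   realised in {poly int} as the exact quotient of the two products
   (the denominator has leading coefficient +-1, a unit of int, so %/ is
   exact Euclidean division, and the quotient is exact since the divisibility
   holds). *)
Definition gauss (n m : nat) : {poly int} :=
  (\prod_(i < m) (1 - 'X^(n - i))) %/ (\prod_(i < m) (1 - 'X^(m - i))).

Definition kapq (n m : nat) : {poly int} :=
  ((1 - 'X^(n + m)) * gauss n m) %/ (1 - 'X^n).

(* Main.v *)
Require Import Defs.
From mathcomp Require Import all_boot all_order all_algebra.
From mathcomp Require Import ring zify.
Import Order.TTheory GRing.Theory Num.Theory.
Local Open Scope ring_scope.

Fixpoint h (n k : nat) {struct n} : {poly int} :=
  match n, k with
  | _, 0%N => 0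
  | 0%N, 1%N => 1
  | 0%N, _ => 0
  | n'.+1, k'.+1 => h n' k' + 'X^k' * h n' k'.+1
  end.

Lemma h0 n : h n 0 = 0. Proof. by case: n. Qed.
Lemma hS n k : h n.+1 k.+1 = h n k + 'X^k * h n k.+1. Proof. by []. Qed.
Lemma h1 n : h n 1 = 1.
Proof. elim: n => [//|n IH]; by rewrite hS h0 IH expr0 mul1r add0r. Qed.

Lemma hz n k : (n.+1 < k)%N -> h n k = 0.
Proof.
elim: n k => [|n IH] [|[|k]] //= Hk.
rewrite IH ?IH ?mulr0 ?addr0 //; lia.
Qed.

Definition nonneg (p : {poly int}) := forall i, 0 <= p`_i.
Definition pge (p q : {poly int}) := nonneg (p - q).

Lemma nonnegD p q : nonneg p -> nonneg q -> nonneg (p + q).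
Proof. by move=> hp hq i; rewrite coefD addr_ge0. Qed.
Lemma nonnegM p q : nonneg p -> nonneg q -> nonneg (p * q).
Proof.
move=> hp hq i; rewrite coefM; apply: sumr_ge0 => j _; exact: mulr_ge0.
Qed.
Lemma nonnegXn k : nonneg 'X^k.
Proof. by move=> i; rewrite coefXn; case: (i == k). Qed.
Lemma nonneg0 : nonneg 0. Proof. by move=> i; rewrite coef0. Qed.
Lemma nonneg1 : nonneg 1. Proof. by move=> i; rewrite coef1; case: (i == 0%N). Qed.

Lemma nonneg_h n k : nonneg (h n k).
Proof.
elim: n k => [|n IH] [|[|k]] //=; try exact: nonneg0; try exact: nonneg1.
all: apply: nonnegD; [exact: IH| apply: nonnegM; [exact: nonnegXn|exact: IH]].
Qed.

Lemma pgeD a b c d : pge a b -> pge c d -> pge (a + c) (b + d).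
Proof. move=> h1 h2; rewrite /pge; have ->: a + c - (b + d) = (a - b) + (c - d) by ring.
exact: nonnegD. Qed.
Lemma pgeM c a b : nonneg c -> pge a b -> pge (c * a) (c * b).
Proof. move=> hc hab; rewrite /pge -mulrBr; exact: nonnegM. Qed.
Lemma pge_eq a b a' b' : a = a' -> b = b' -> pge a b -> pge a' b'.
Proof. by move=> -> ->. Qed.
Lemma pge_refl a : pge a a. Proof. rewrite /pge subrr; exact: nonneg0. Qed.
Lemma pge0 a : nonneg a -> pge a 0. Proof. by rewrite /pge subr0. Qed.


Lemma P2h n k e : (k + e = n.+1)%N -> h n.+1 k.+1 = 'X^e * h n k + h n k.+1.
Proof.
elim: n k e => [|n IH] k e He.
  case: k He => [|[|k]] He; last lia.
  - have -> : e = 1%N by lia. rewrite /=; ring.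
  - have -> : e = 0%N by lia. rewrite /=; ring.
case: k He => [|i] He; first by rewrite !h1 h0 mulr0 add0r.
rewrite [in RHS]hS [in RHS](hS n i.+1) hS (IH i e); last lia.
case: e He => [|e'] He.
  rewrite (@hz n.+1 i.+2); last lia.
  rewrite (@hz n i.+2); last lia.
  rewrite (@hz n i.+1); last lia. by rewrite !mulr0; ring.
rewrite (IH i.+1 e'); last lia.
rewrite !exprS; ring.
Qed.

Lemma Rh n k e : (k + e = n.+1)%N -> (1 - 'X^k) * h n k.+1 = (1 - 'X^e) * h n k.
Proof.
move=> He; have := @P2h n k e He; rewrite hS => E.
apply/eqP; rewrite -subr_eq0.
have -> : (1 - 'X^k) * h n k.+1 - (1 - 'X^e) * h n k
  = (('X^e * h n k + h n k.+1) - (h n k + 'X^k * h n k.+1)) by ring.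
by rewrite E subrr.
Qed.

Lemma Qh n k : (1 - 'X^(k.+1)) * h n.+1 k.+2 = (1 - 'X^(n.+1)) * h n k.+1.
Proof.
case: (leqP k n) => Hk; last first.
  by rewrite !hz ?mulr0 //; lia.
have E := @Rh n k.+1 (n - k) ltac:(lia).
rewrite hS.
have -> : 'X^(n.+1) = 'X^(k.+1) * 'X^(n - k) :> {poly int} by rewrite -exprD; congr (_ ^+ _); lia.
apply/eqP; rewrite -subr_eq0.
have -> : (1 - 'X^(k.+1)) * (h n k.+1 + 'X^(k.+1) * h n k.+2) -
  (1 - 'X^(k.+1) * 'X^(n - k)) * h n k.+1 =
  'X^(k.+1) * ((1 - 'X^(k.+1)) * h n k.+2 - (1 - 'X^(n - k)) * h n k.+1) by ring.
by rewrite E subrr mulr0.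
Qed.

Lemma prodf n m : h n m.+1 * \prod_(i < m) (1 - 'X^(m - i)) = \prod_(i < m) (1 - 'X^(n - i)) :> {poly int}.
Proof.
elim: m n => [|m IH] n; first by rewrite !big_ord0 h1 mulr1.
rewrite !big_ord_recl !subn0.
have E1 : \prod_(i < m) (1 - 'X^(m.+1 - lift ord0 i)) = \prod_(i < m) (1 - 'X^(m - i)) :> {poly int}.
  by apply: eq_bigr => i _; rewrite lift0 subSS.
rewrite E1.
case: n => [|n].
  by rewrite expr0 subrr !mul0r /=.
have E2 : \prod_(i < m) (1 - 'X^(n.+1 - lift ord0 i)) = \prod_(i < m) (1 - 'X^(n - i)) :> {poly int}.
  by apply: eq_bigr => i _; rewrite lift0 subSS.
rewrite E2 -(IH n) mulrA [h _ _ * _]mulrC Qh; ring.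
Qed.

Lemma lc1X k : (0 < k)%N -> lead_coef (1 - 'X^k : {poly int}) = -1.
Proof. by move=> hk; rewrite -opprB lead_coefN lead_coefXnsubC. Qed.

Lemma gaussE n m : gauss n m = h n m.+1.
Proof.
rewrite /gauss -prodf Pdiv.IdomainUnit.mulpK //.
rewrite lead_coef_prod; apply: (big_ind (fun x : int => x \is a GRing.unit)); first exact: unitr1.
  by move=> x y hx hy; rewrite unitrM hx hy.
by move=> i _; rewrite lc1X ?unitrN1 //; have := ltn_ord i; lia.
Qed.

Definition Kf n k := (1 + 'X^n) * h n.-1 k + 'X^k * h n.-1 k.+1.

Lemma kapqE n k : (0 < n)%N -> kapq n k = Kf n k.
Proof.
case: n => [//|a] _.
rewrite /kapq gaussE /Kf /=.
suff -> : (1 - 'X^(a.+1 + k)) * (h a k + 'X^k * h a k.+1) = Kf a.+1 k * (1 - 'X^(a.+1)).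
  by rewrite Pdiv.IdomainUnit.mulpK // lc1X // unitrN1.
rewrite /Kf /=.
case: (leqP k a.+1) => Hk; last first.
  by rewrite !(@hz a k) ?(@hz a k.+1) //; try lia; ring.
have E := @Rh a k (a.+1 - k) ltac:(lia).
rewrite exprD.
have -> : 'X^(a.+1) = 'X^k * 'X^(a.+1 - k) :> {poly int} by rewrite -exprD; congr (_ ^+ _); lia.
apply/eqP; rewrite -subr_eq0.
have -> : forall Xk Xe : {poly int}, (1 - Xk * Xe * Xk) * (h a k + Xk * h a k.+1) -
  ((1 + Xk * Xe) * h a k + Xk * h a k.+1) * (1 - Xk * Xe) =
  Xk * Xe * Xk * ((1 - Xk) * h a k.+1 - (1 - Xe) * h a k) by move=> *; ring.
by rewrite E subrr mulr0.
Qed.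

#[global] Arguments pgeD {a b c d}.
Lemma pge_eq' a b a' b' : pge a b -> a = a' -> b = b' -> pge a' b'.
Proof. by move=> H <- <-. Qed.
#[global] Arguments pge_eq' {a b a' b'}.

Ltac nn := repeat first [ apply: nonnegM | apply: nonnegD | apply: nonnegXn | apply: nonneg1 | apply: nonneg_h ].

Lemma scheme A B Q a0 b0 a1 b1 c0 d0 c1 d1 y0 y1 y2 z0 z1 z2 :
  A = (a1*y1 + b1*y2)*(c0*z0+d0*z1) -> B = (a0*y0+b0*y1)*(c1*z1+d1*z2) ->
  pge (b1*d0*(y2*z1)) (Q*(b0*d1*(y1*z2))) ->
  pge (a1*c0*(y1*z0)) (Q*(a0*c1*(y0*z1))) ->
  pge (a1*d0*(y1*z1)) (Q*(a0*d1*(y0*z2))) ->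
  pge (b1*c0*(y2*z0)) (Q*(b0*c1*(y1*z1))) ->
  pge A (Q * B).
Proof.
move=> -> -> H1 H2 H3 H4.
apply: (pge_eq' (pgeD (pgeD H1 H2) (pgeD H3 H4))); ring.
Qed.

Lemma pgeC c Y Z s a' b' : nonneg c -> pge Y ('X^s * Z) -> a' = c * Y -> b' = c * ('X^s * Z) -> pge a' b'.
Proof. by move=> hc hY -> ->; apply: pgeM. Qed.

Lemma pgeC2 c1 c2 Y Z s1 s2 a' b' : nonneg c1 -> nonneg c2 ->
  pge Y ('X^s1 * Z) -> pge Y ('X^s2 * Z) ->
  a' = (c1 + c2) * Y -> b' = c1 * ('X^s1 * Z) + c2 * ('X^s2 * Z) -> pge a' b'.
Proof.
move=> h1 h2 hY1 hY2 -> ->; rewrite mulrDl; apply: pgeD; exact: pgeM.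
Qed.
#[global] Opaque pge.


Ltac re := rewrite ?exprS ?expr0; ring.

Lemma LCh a : forall M L r, (M < L)%N -> (r <= 2 * (L - M))%N ->
  pge (h a M.+1 * h a L) ('X^r * (h a M * h a L.+1)).
Proof.
elim: a => [|a IH] M L r HML Hr.
  rewrite (@hz 0 L.+1); last lia.
  by rewrite !mulr0; apply: pge0; nn.
case: M HML Hr => [|j] HML Hr.
  by rewrite h0 mul0r mulr0; apply: pge0; nn.
case: (ltnP a.+1 L) => HL.
  rewrite (@hz a.+1 L.+1); last lia.
  by rewrite !mulr0; apply: pge0; nn.
case: L HML Hr HL => [//|l] HML Hr HL.
have El : h a.+1 l.+1 = h a l + 'X^l * h a l.+1 := hS a l.
have El1 : h a.+1 l.+2 = h a l.+1 + 'X^(l.+1) * h a l.+2 := hS a l.+1.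
have Em : h a.+1 j.+2 = h a j.+1 + 'X^(j.+1) * h a j.+2 := hS a j.+1.
have Em1 : h a.+1 j.+1 = h a j + 'X^j * h a j.+1 := hS a j.
have P4 : forall s, (l = j.+1 -> s = 0%N) -> (s <= 2 * (l - j.+1))%N ->
    pge (h a j.+2 * h a l) ('X^s * (h a j.+1 * h a l.+1)).
  move=> s Hs0 Hs; case: (ltnP j.+1 l) => Hjl; first by apply: IH; lia.
  have El0 : l = j.+1 by lia.
  rewrite (Hs0 El0) El0.
  apply: (pge_eq' (pge_refl (h a j.+2 * h a j.+1))); re.
case: r Hr => [|[|s]] Hr.
-
  have Em' : h a.+1 j.+2 = 'X^(a - j) * h a j.+1 + h a j.+2 := @P2h a j.+1 (a - j) ltac:(lia).
  have Em1' : h a.+1 j.+1 = 'X^((a - j).+1) * h a j + h a j.+1 := @P2h a j (a - j).+1 ltac:(lia).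
  apply: (@scheme _ _ _ ('X^((a - j).+1)) 1 ('X^(a - j)) 1 1 ('X^l) 1 ('X^(l.+1))
     (h a j) (h a j.+1) (h a j.+2) (h a l) (h a l.+1) (h a l.+2)).
  + rewrite Em' El; ring.
  + rewrite Em1' El1; ring.
  + apply: (@pgeC ('X^l) (h a j.+2 * h a l.+1) (h a j.+1 * h a l.+2) 1); [nn| apply: IH; lia | re | re].
  + apply: (@pgeC ('X^(a - j)) (h a j.+1 * h a l) (h a j * h a l.+1) 1); [nn| apply: IH; lia | re | re].
  + apply: (@pgeC ('X^(a - j) * 'X^l) (h a j.+1 * h a l.+1) (h a j * h a l.+2) 2); [nn| apply: IH; lia | re | re].
  + apply: (@pgeC 1 (h a j.+2 * h a l) (h a j.+1 * h a l.+1) 0); [nn| apply: P4; lia | re | re].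
-
  apply: (@scheme _ _ _ 1 ('X^j) 1 ('X^(j.+1)) 1 ('X^l) 1 ('X^(l.+1))
     (h a j) (h a j.+1) (h a j.+2) (h a l) (h a l.+1) (h a l.+2)).
  + rewrite Em El; ring.
  + rewrite Em1 El1; ring.
  + apply: (@pgeC ('X^(j.+1) * 'X^l) (h a j.+2 * h a l.+1) (h a j.+1 * h a l.+2) 1); [nn| apply: IH; lia | re | re].
  + apply: (@pgeC 1 (h a j.+1 * h a l) (h a j * h a l.+1) 1); [nn| apply: IH; lia | re | re].
  + apply: (@pgeC ('X^l) (h a j.+1 * h a l.+1) (h a j * h a l.+2) 2); [nn| apply: IH; lia | re | re].
  + apply: (@pgeC ('X^(j.+1)) (h a j.+2 * h a l) (h a j.+1 * h a l.+1) 0); [nn| apply: P4; lia | re | re].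
-
  have El' : h a.+1 l.+1 = 'X^((a - l).+1) * h a l + h a l.+1 := @P2h a l (a - l).+1 ltac:(lia).
  have El1' : h a.+1 l.+2 = 'X^(a - l) * h a l.+1 + h a l.+2 := @P2h a l.+1 (a - l) ltac:(lia).
  apply: (@scheme _ _ _ 1 ('X^j) 1 ('X^(j.+1)) ('X^((a - l).+1)) 1 ('X^(a - l)) 1
     (h a j) (h a j.+1) (h a j.+2) (h a l) (h a l.+1) (h a l.+2)).
  + rewrite Em El'; ring.
  + rewrite Em1 El1'; ring.
  + apply: (@pgeC ('X^(j.+1)) (h a j.+2 * h a l.+1) (h a j.+1 * h a l.+2) s.+1); [nn| apply: IH; lia | re | re].
  + apply: (@pgeC ('X^((a - l).+1)) (h a j.+1 * h a l) (h a j * h a l.+1) s.+1); [nn| apply: IH; lia | re | re].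
  + apply: (@pgeC 1 (h a j.+1 * h a l.+1) (h a j * h a l.+2) s.+2); [nn| apply: IH; lia | re | re].
  + apply: (@pgeC ('X^(j.+1) * 'X^((a - l).+1)) (h a j.+2 * h a l) (h a j.+1 * h a l.+1) s); [nn| apply: P4; lia | re | re].
Qed.



Lemma F2 a k e : (k + e = a.+1)%N ->
  Kf a.+1 k = 'X^e * (1 + 'X^k) * h a k + h a k.+1.
Proof.
move=> He; have E := @Rh a k e He.
rewrite /Kf /=.
have -> : 'X^(a.+1) = 'X^k * 'X^e :> {poly int} by rewrite -exprD He.
apply/eqP; rewrite -subr_eq0.
have -> : forall Xk Xe : {poly int}, (1 + Xk * Xe) * h a k + Xk * h a k.+1 -
  (Xe * (1 + Xk) * h a k + h a k.+1) =
  - ((1 - Xk) * h a k.+1 - (1 - Xe) * h a k) by move=> *; ring.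
by rewrite E subrr oppr0.
Qed.

Lemma F3 a k : (k <= a.+1)%N ->
  Kf a.+1 k = (1 + 'X^k) * h a k + 'X^k * 'X^k * h a k.+1.
Proof.
move=> Hk; have E := @Rh a k (a.+1 - k) ltac:(lia).
rewrite /Kf /=.
have -> : 'X^(a.+1) = 'X^k * 'X^(a.+1 - k) :> {poly int} by rewrite -exprD; congr (_ ^+ _); lia.
apply/eqP; rewrite -subr_eq0.
have -> : forall Xk Xe : {poly int}, (1 + Xk * Xe) * h a k + Xk * h a k.+1 -
  ((1 + Xk) * h a k + Xk * Xk * h a k.+1) =
  Xk * ((1 - Xk) * h a k.+1 - (1 - Xe) * h a k) by move=> *; ring.
by rewrite E subrr mulr0.
Qed.

Lemma Kmain a j l r : (j < l)%N -> (l < a.+1)%N -> (r <= 2 * (l - j))%N ->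
  pge (Kf a.+1 j.+1 * Kf a.+1 l) ('X^r * (Kf a.+1 j * Kf a.+1 l.+1)).
Proof.
move=> Hjl HL Hr.
have IH := @LCh a.
have El : Kf a.+1 l = (1 + 'X^(a.+1)) * h a l + 'X^l * h a l.+1 by [].
have El1 : Kf a.+1 l.+1 = (1 + 'X^(a.+1)) * h a l.+1 + 'X^(l.+1) * h a l.+2 by [].
have Em : Kf a.+1 j.+1 = (1 + 'X^(a.+1)) * h a j.+1 + 'X^(j.+1) * h a j.+2 by [].
have Em1 : Kf a.+1 j = (1 + 'X^(a.+1)) * h a j + 'X^j * h a j.+1 by [].
have P4 : forall s, (l = j.+1 -> s = 0%N) -> (s <= 2 * (l - j.+1))%N ->
    pge (h a j.+2 * h a l) ('X^s * (h a j.+1 * h a l.+1)).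
  move=> s Hs0 Hs; case: (ltnP j.+1 l) => Hjl'; first by apply: IH; lia.
  have El0 : l = j.+1 by lia.
  rewrite (Hs0 El0) El0.
  apply: (pge_eq' (pge_refl (h a j.+2 * h a j.+1))); re.
case: r Hr => [|[|s]] Hr.
-
  have Em' := @F2 a j.+1 (a - j) ltac:(lia).
  have Em1' := @F2 a j (a - j).+1 ltac:(lia).
  apply: (@scheme _ _ _ ('X^((a - j).+1) * (1 + 'X^j)) 1 ('X^(a - j) * (1 + 'X^(j.+1))) 1
     (1 + 'X^(a.+1)) ('X^l) (1 + 'X^(a.+1)) ('X^(l.+1))
     (h a j) (h a j.+1) (h a j.+2) (h a l) (h a l.+1) (h a l.+2)).
  + rewrite Em' El; ring.
  + rewrite Em1' El1; ring.
  + apply: (@pgeC ('X^l) (h a j.+2 * h a l.+1) (h a j.+1 * h a l.+2) 1); [nn| apply: IH; lia | re | re].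
  + apply: (@pgeC2 ('X^(a - j) * (1 + 'X^(a.+1))) ('X^(a - j) * 'X^(j.+1) * (1 + 'X^(a.+1))) (h a j.+1 * h a l) (h a j * h a l.+1) 1 0);
      [nn | nn | apply: IH; lia | apply: IH; lia | re | re].
  + apply: (@pgeC2 ('X^(a - j) * 'X^l) ('X^(a - j) * 'X^(j.+1) * 'X^l) (h a j.+1 * h a l.+1) (h a j * h a l.+2) 2 1);
      [nn | nn | apply: IH; lia | apply: IH; lia | re | re].
  + apply: (@pgeC (1 + 'X^(a.+1)) (h a j.+2 * h a l) (h a j.+1 * h a l.+1) 0); [nn| apply: P4; lia | re | re].
-
  apply: (@scheme _ _ _ (1 + 'X^(a.+1)) ('X^j) (1 + 'X^(a.+1)) ('X^(j.+1)) (1 + 'X^(a.+1)) ('X^l) (1 + 'X^(a.+1)) ('X^(l.+1))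
     (h a j) (h a j.+1) (h a j.+2) (h a l) (h a l.+1) (h a l.+2)).
  + rewrite Em El; ring.
  + rewrite Em1 El1; ring.
  + apply: (@pgeC ('X^(j.+1) * 'X^l) (h a j.+2 * h a l.+1) (h a j.+1 * h a l.+2) 1); [nn| apply: IH; lia | re | re].
  + apply: (@pgeC ((1 + 'X^(a.+1)) * (1 + 'X^(a.+1))) (h a j.+1 * h a l) (h a j * h a l.+1) 1); [nn| apply: IH; lia | re | re].
  + apply: (@pgeC ((1 + 'X^(a.+1)) * 'X^l) (h a j.+1 * h a l.+1) (h a j * h a l.+2) 2); [nn| apply: IH; lia | re | re].
  + apply: (@pgeC ('X^(j.+1) * (1 + 'X^(a.+1))) (h a j.+2 * h a l) (h a j.+1 * h a l.+1) 0); [nn| apply: P4; lia | re | re].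
-
  have Em' := @F3 a j.+1 ltac:(lia).
  have Em1' := @F3 a j ltac:(lia).
  apply: (@scheme _ _ _ (1 + 'X^j) ('X^j * 'X^j) (1 + 'X^(j.+1)) ('X^(j.+1) * 'X^(j.+1))
     (1 + 'X^(a.+1)) ('X^l) (1 + 'X^(a.+1)) ('X^(l.+1))
     (h a j) (h a j.+1) (h a j.+2) (h a l) (h a l.+1) (h a l.+2)).
  + rewrite Em' El; ring.
  + rewrite Em1' El1; ring.
  + apply: (@pgeC ('X^(j.+1) * 'X^(j.+1) * 'X^l) (h a j.+2 * h a l.+1) (h a j.+1 * h a l.+2) s.+1); [nn| apply: IH; lia | re | re].
  + apply: (@pgeC2 (1 + 'X^(a.+1)) ('X^(j.+1) * (1 + 'X^(a.+1))) (h a j.+1 * h a l) (h a j * h a l.+1) s.+2 s.+1);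
      [nn | nn | apply: IH; lia | apply: IH; lia | re | re].
  + apply: (@pgeC2 ('X^l) ('X^(j.+1) * 'X^l) (h a j.+1 * h a l.+1) (h a j * h a l.+2) s.+3 s.+2);
      [nn | nn | apply: IH; lia | apply: IH; lia | re | re].
  + apply: (@pgeC ('X^(j.+1) * 'X^(j.+1) * (1 + 'X^(a.+1))) (h a j.+2 * h a l) (h a j.+1 * h a l.+1) s); [nn| apply: P4; lia | re | re].
Qed.


Theorem theorem1p2 (n m l r : nat) :
  (1 <= m)%N -> (m <= l)%N -> (l < n)%N -> (r <= 2 * l - 2 * m + 2)%N ->
  forall i : nat,
    0 <= (kapq n m * kapq n l - 'X^r * kapq n (m - 1) * kapq n (l + 1))`_i.
Proof.
move=> Hm Hml Hln Hr i.
case: n Hln => [|a] Hln; first by lia.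
case: m Hm Hml Hr => [//|j] _ Hml Hr.
rewrite !kapqE // subn1 /= addn1 -mulrA.
apply: Kmain; lia.
Qed.
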